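(* Let $*\in\{\pm,\curlyvee,\Join,1\}$. For every $\phi\in\mathcal{L}$ and every state $\mathfrak{s}$ of the canonical model $\mathfrak{M}^{C}_*$: (1) $\mathfrak{M}^{C}_*,\mathfrak{s}\Vdash^+\phi$ iff $\phi\in\mathbf{h}(\mathfrak{s})$; (2) $\mathfrak{M}^{C}_*,\mathfrak{s}\Vdash^-\phi$ iff ${\sim}\phi\in\mathbf{h}(\mathfrak{s})$.
   Context: Fix a countable set $\mathsf{Prop}$ of propositional variables. The language $\mathcal{L}$ is given by the grammar $\phi::=p\mid{\sim}\phi\mid(\phi\wedge\phi)\mid(\phi\vee\phi)\mid(\phi\to\phi)\mid\Box\phi\mid\Diamond\phi$ with $p\in\mathsf{Prop}$. $\phi\leftrightarrow\chi$ abbreviates $(\phi\to\chi)\wedge(\chi\to\phi)$. Semantics. A structure $\langle W,\le,R^+_\Box,R^-_\Box,R^+_\Diamond,R^-_\Diamond,v^+,v^-\rangle$ with $W\ne\varnothing$, $\le$ a preorder, four arbitrary binary relations, and $v^+,v^-:\mathsf{Prop}\to2^W$ upward closed under $\le$ is a $\mathsf{CN4K}$ model; $R(w)=\{w'\mid wRw'\}$. Support: $w\Vdash^\pm p$ iff $w\in v^\pm(p)$; $w\Vdash^+{\sim}\phi$ iff $w\Vdash^-\phi$; $w\Vdash^-{\sim}\phi$ iff $w\Vdash^+\phi$; $w\Vdash^+\phi\wedge\chi$ iff both; $w\Vdash^-\phi\wedge\chi$ iff $w\Vdash^-\phi$ or $w\Vdash^-\chi$; $w\Vdash^+\phi\vee\chi$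 iff $w\Vdash^+\phi$ or $w\Vdash^+\chi$; $w\Vdash^-\phi\vee\chi$ iff both negatively supported; $w\Vdash^+\phi\to\chi$ iff for all $w'\ge w$, $w'\Vdash^+\phi$ implies $w'\Vdash^+\chi$; $w\Vdash^-\phi\to\chi$ iff $w\Vdash^+\phi$ and $w\Vdash^-\chi$; $w\Vdash^+\Box\phi$ iff $\forall w'\ge w\ \forall w''\in R^+_\Box(w')$: $w''\Vdash^+\phi$; $w\Vdash^-\Box\phi$ iff $\forall w'\ge w\ \exists w''\in R^-_\Box(w')$: $w''\Vdash^-\phi$; $w\Vdash^+\Diamond\phi$ iff $\forall w'\ge w\ \exists w''\in R^+_\Diamond(w')$: $w''\Vdash^+\phi$; $w\Vdash^-\Diamond\phi$ iff $\forall w'\ge w\ \forall w''\in R^-_\Diamond(w')$: $w''\Vdash^-\phi$. Calculi. $\mathcal{H}\mathsf{N4}$ has as axioms all $\mathcal{L}$-instances of: $\phi\to(\chi\to\phi)$; $(\phi\to(\chi\to\psi))\to((\phi\to\chi)\to(\phi\to\psi))$; $\phi\wedge\chi\to\phi$; $\phi\wedge\chi\to\chi$; $\phi\to(\chi\to\phi\wedge\chi)$; $\phi\to\phi\vee\chi$; $\chi\to\phi\vee\chi$; $(\phi\to\psi)\to((\chi\to\psi)\to(\phi\vee\chi\to\psi))$; ${\sim}{\sim}\phi\leftrightarrow\phi$; ${\sim}(\phi\wedge\chi)\leftrightarrow({\sim}\phi\vee{\sim}\chi)$; ${\sim}(\phi\vee\chi)\leftrightarrow({\sim}\phi\wedge{\sim}\chi)$;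 ${\sim}(\phi\to\chi)\leftrightarrow(\phi\wedge{\sim}\chi)$; and modus ponens. $\mathcal{H}\mathsf{CN4K}$ adds the axiom schemes $\Box(\phi\to\phi)$; ${\sim}\Diamond{\sim}(\phi\to\phi)$; $(\Box\phi\wedge\Box\chi)\to\Box(\phi\wedge\chi)$; $({\sim}\Diamond\phi\wedge{\sim}\Diamond\chi)\to{\sim}\Diamond(\phi\vee\chi)$, and the rules: from $\vdash\phi\to\chi$ infer $\vdash\Box\phi\to\Box\chi$; from $\vdash\phi\to\chi$ infer $\vdash\Diamond\phi\to\Diamond\chi$; from $\vdash{\sim}\phi\to{\sim}\chi$ infer $\vdash{\sim}\Box\phi\to{\sim}\Box\chi$; from $\vdash{\sim}\phi\to{\sim}\chi$ infer $\vdash{\sim}\Diamond\phi\to{\sim}\Diamond\chi$. Additional schemes: $\pm_\Box$: $\Box(\phi\to\chi)\to(\Diamond\phi\to\Diamond\chi)$; $\pm_\Diamond$: ${\sim}\Diamond{\sim}({\sim}\phi\to{\sim}\chi)\to({\sim}\Box\phi\to{\sim}\Box\chi)$; $\curlyvee_\Box$: $\Box(\phi\to\chi)\to({\sim}\Box{\sim}\phi\to{\sim}\Box{\sim}\chi)$; $\curlyvee_\Diamond$: ${\sim}\Diamond{\sim}(\phi\to\chi)\to(\Diamond\phi\to\Diamond\chi)$; $\Join_\Box$: $\Box\phi\leftrightarrow{\sim}\Diamond{\sim}\phi$; $\Join_\Diamond$: $\Diamond\phi\leftrightarrow{\sim}\Box{\sim}\phi$. $\mathcal{H}\mathsf{CN4K}^\pm$,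 $\mathcal{H}\mathsf{CN4K}^\curlyvee$, $\mathcal{H}\mathsf{CN4K}^{\Join}$ are $\mathcal{H}\mathsf{CN4K}$ plus $\{\pm_\Box,\pm_\Diamond\}$, $\{\curlyvee_\Box,\curlyvee_\Diamond\}$, $\{\Join_\Box,\Join_\Diamond\}$ respectively; $\mathcal{H}\mathsf{CN4K}^1$ is $\mathcal{H}\mathsf{CN4K}$ plus all six. $\Gamma\vdash_{\mathcal{H}\mathsf{L}}\phi$ means there is a finite sequence ending in $\phi$ of axiom instances, members of $\Gamma$, and rule consequences of earlier members, the modal rules being applied only to theorems. Canonical models. For fixed $*$, a set $\Xi\subseteq\mathcal{L}$ is saturated if it is deductively closed under $\vdash_{\mathcal{H}\mathsf{CN4K}^*}$ and prime ($\xi\vee\xi'\in\Xi$ implies $\xi\in\Xi$ or $\xi'\in\Xi$). A segment is a tuple $\mathfrak{s}=\langle\Xi,\Phi^+_\Box,\Phi^-_\Box,\Phi^+_\Diamond,\Phi^-_\Diamond\rangle$ where $\Xi$ is saturated (the head, $\mathbf{h}(\mathfrak{s})=\Xi$) and each $\Phi^\bullet_\heartsuit$ is a set (possibly empty) of saturated sets such that: if $\Box\phi\in\Xi$ then $\phi\in\Delta$ for every $\Delta\in\Phi^+_\Box$; if ${\sim}\Box\phi\in\Xi$ then ${\sim}\phi\in\Delta$ for some $\Delta\in\Phi^-_\Box$; if $\Diamond\phi\in\Xi$ then $\phi\in\Delta$ for some $\Delta\in\Phi^+_\Diamond$; if ${\sim}\Diamond\phi\in\Xi$ then ${\sim}\phi\in\Delta$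 for every $\Delta\in\Phi^-_\Diamond$. A segment is a $\pm$-segment if $\Phi^+_\Box=\Phi^+_\Diamond$ and $\Phi^-_\Box=\Phi^-_\Diamond$; a $\curlyvee$-segment if $\Phi^+_\Box=\Phi^-_\Box$ and $\Phi^+_\Diamond=\Phi^-_\Diamond$; a $\Join$-segment if $\Phi^+_\Box=\Phi^-_\Diamond$ and $\Phi^+_\Diamond=\Phi^-_\Box$; a $1$-segment if all four families coincide. $\mathfrak{M}^{C}_*$ has as states all $*$-segments, $\mathfrak{s}\le^{C}\mathfrak{s}'$ iff $\mathbf{h}(\mathfrak{s})\subseteq\mathbf{h}(\mathfrak{s}')$, $\mathfrak{s}\,{R^\bullet_\heartsuit}^{C}\,\mathfrak{s}'$ iff $\mathbf{h}(\mathfrak{s}')\in\Phi^\bullet_\heartsuit$ (the corresponding component of $\mathfrak{s}$), $\mathfrak{s}\in{v^+}^{C}(p)$ iff $p\in\mathbf{h}(\mathfrak{s})$, $\mathfrak{s}\in{v^-}^{C}(p)$ iff ${\sim}p\in\mathbf{h}(\mathfrak{s})$. *)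

(* Defs.v *)
Set Implicit Arguments.

Inductive form : Type :=
| Var  : nat -> form
| Neg  : form -> form            (* strong negation ~ *)
| Conj : form -> form -> form
| Disj : form -> form -> form
| Imp  : form -> form -> form
| Box  : form -> form
| Dia  : form -> form.

Definition Iff (a b : form) : form := Conj (Imp a b) (Imp b a).

Inductive star : Type := Spm | Svee | Sjoin | Sone.

Inductive axN4 : form -> Prop :=
| A1 a b : axN4 (Imp a (Imp b a))
| A2 a b c : axN4 (Imp (Imp a (Imp b c)) (Imp (Imp a b) (Imp a c)))
| A3 a b : axN4 (Imp (Conj a b) a)
| A4 a b : axN4 (Imp (Conj a b) b)
| A5 a b : axN4 (Imp a (Imp b (Conj a b)))
| A6 a b : axN4 (Imp a (Disj a b))
| A7 a b : axN4 (Imp b (Disj a b))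
| A8 a b c : axN4 (Imp (Imp a c) (Imp (Imp b c) (Imp (Disj a b) c)))
| N1 a : axN4 (Iff (Neg (Neg a)) a)
| N2 a b : axN4 (Iff (Neg (Conj a b)) (Disj (Neg a) (Neg b)))
| N3 a b : axN4 (Iff (Neg (Disj a b)) (Conj (Neg a) (Neg b)))
| N4 a b : axN4 (Iff (Neg (Imp a b)) (Conj a (Neg b))).

Inductive axCN4K : form -> Prop :=
| K1 a : axCN4K (Box (Imp a a))
| K2 a : axCN4K (Neg (Dia (Neg (Imp a a))))
| K3 a b : axCN4K (Imp (Conj (Box a) (Box b)) (Box (Conj a b)))
| K4 a b : axCN4K (Imp (Conj (Neg (Dia a)) (Neg (Dia b))) (Neg (Dia (Disj a b)))).

Definition ax_pmB (a b : form) : form := Imp (Box (Imp a b)) (Imp (Dia a) (Dia b)).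
Definition ax_pmD (a b : form) : form :=
  Imp (Neg (Dia (Neg (Imp (Neg a) (Neg b))))) (Imp (Neg (Box a)) (Neg (Box b))).
Definition ax_veeB (a b : form) : form :=
  Imp (Box (Imp a b)) (Imp (Neg (Box (Neg a))) (Neg (Box (Neg b)))).
Definition ax_veeD (a b : form) : form :=
  Imp (Neg (Dia (Neg (Imp a b)))) (Imp (Dia a) (Dia b)).
Definition ax_joinB (a : form) : form := Iff (Box a) (Neg (Dia (Neg a))).
Definition ax_joinD (a : form) : form := Iff (Dia a) (Neg (Box (Neg a))).

Inductive ax_pm : form -> Prop :=
| Pm1 a b : ax_pm (ax_pmB a b)
| Pm2 a b : ax_pm (ax_pmD a b).
Inductive ax_vee : form -> Prop :=
| Ve1 a b : ax_vee (ax_veeB a b)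
| Ve2 a b : ax_vee (ax_veeD a b).
Inductive ax_join : form -> Prop :=
| Jo1 a : ax_join (ax_joinB a)
| Jo2 a : ax_join (ax_joinD a).

Definition ax_extra (s : star) (f : form) : Prop :=
  match s with
  | Spm => ax_pm f
  | Svee => ax_vee f
  | Sjoin => ax_join f
  | Sone => ax_pm f \/ ax_vee f \/ ax_join f
  end.

Definition axiom (s : star) (f : form) : Prop :=
  axN4 f \/ axCN4K f \/ ax_extra s f.

Definition fset := form -> Prop.
Definition emptyset : fset := fun _ => False.

Inductive derivable (s : star) (G : fset) : form -> Prop :=
| d_ax f : axiom s f -> derivable s G f
| d_hyp f : G f -> derivable s G f
| d_mp a b : derivable s G (Imp a b) -> derivable s G a -> derivable s G b
| d_boxP a b : derivable s emptyset (Imp a b) ->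
    derivable s G (Imp (Box a) (Box b))
| d_diaP a b : derivable s emptyset (Imp a b) ->
    derivable s G (Imp (Dia a) (Dia b))
| d_boxN a b : derivable s emptyset (Imp (Neg a) (Neg b)) ->
    derivable s G (Imp (Neg (Box a)) (Neg (Box b)))
| d_diaN a b : derivable s emptyset (Imp (Neg a) (Neg b)) ->
    derivable s G (Imp (Neg (Dia a)) (Neg (Dia b))).

Definition saturated (s : star) (X : fset) : Prop :=
  (forall f, derivable s X f -> X f) /\
  (forall a b, X (Disj a b) -> X a \/ X b).

Definition family := fset -> Prop.
Definition same_set (X Y : fset) : Prop := forall f, X f <-> Y f.
Definition mem_fam (P : family) (X : fset) : Prop :=
  exists Y, P Y /\ same_set Y X.
Definition same_fam (P Q : family) : Prop := forall X, mem_fam P X <-> mem_fam Q X.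

Definition seg_shape (s : star) (Bp Bn Dp Dn : family) : Prop :=
  match s with
  | Spm => same_fam Bp Dp /\ same_fam Bn Dn
  | Svee => same_fam Bp Bn /\ same_fam Dp Dn
  | Sjoin => same_fam Bp Dn /\ same_fam Dp Bn
  | Sone => same_fam Bp Bn /\ same_fam Bp Dp /\ same_fam Bp Dn
  end.

Record segment (s : star) : Type := Segment {
  head : fset;
  fBp : family; fBn : family; fDp : family; fDn : family;
  head_sat : saturated s head;
  fBp_sat : forall X, fBp X -> saturated s X;
  fBn_sat : forall X, fBn X -> saturated s X;
  fDp_sat : forall X, fDp X -> saturated s X;
  fDn_sat : forall X, fDn X -> saturated s X;
  seg_Bp : forall a, head (Box a) -> forall X, fBp X -> X a;
  seg_Bn : forall a, head (Neg (Box a)) -> exists X, fBn X /\ X (Neg a);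
  seg_Dp : forall a, head (Dia a) -> exists X, fDp X /\ X a;
  seg_Dn : forall a, head (Neg (Dia a)) -> forall X, fDn X -> X (Neg a);
  seg_sh : seg_shape s fBp fBn fDp fDn
}.
Arguments head {s}. Arguments fBp {s}. Arguments fBn {s}.
Arguments fDp {s}. Arguments fDn {s}.

(* CN4K structures (underlying data; the frame conditions are not needed to
   state the support relation). *)
Record structure : Type := Structure {
  W : Type;
  le : W -> W -> Prop;
  RBp : W -> W -> Prop; RBn : W -> W -> Prop;
  RDp : W -> W -> Prop; RDn : W -> W -> Prop;
  vp : nat -> W -> Prop; vn : nat -> W -> Prop
}.

(* support: supp M f true w  is  w ||-+ f ; supp M f false w  is  w ||-- f *)
Fixpoint supp (M : structure) (f : form) (b : bool) (w : W M) {struct f} : Prop :=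
  match f with
  | Var p => if b then vp M p w else vn M p w
  | Neg a => supp M a (negb b) w
  | Conj a c => if b then supp M a true w /\ supp M c true w
                else supp M a false w \/ supp M c false w
  | Disj a c => if b then supp M a true w \/ supp M c true w
                else supp M a false w /\ supp M c false w
  | Imp a c => if b then (forall w', le M w w' -> supp M a true w' -> supp M c true w')
               else supp M a true w /\ supp M c false w
  | Box a => if b then (forall w', le M w w' -> forall w'', RBp M w' w'' -> supp M a true w'')
             else (forall w', le M w w' -> exists w'', RBn M w' w'' /\ supp M a false w'')
  | Dia a => if b then (forall w', le M w w' -> exists w'', RDp M w' w'' /\ supp M a true w'')
             else (forall w', le M w w' -> forall w'', RDn M w' w'' -> supp M a false w'')
  end.

Definition canon (s : star) : structure := {|
  W := segment s;
  le := fun x y => forall f, head x f -> head y f;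
  RBp := fun x y => mem_fam (fBp x) (head y);
  RBn := fun x y => mem_fam (fBn x) (head y);
  RDp := fun x y => mem_fam (fDp x) (head y);
  RDn := fun x y => mem_fam (fDn x) (head y);
  vp := fun p x => head x (Var p);
  vn := fun p x => head x (Neg (Var p))
|}.

(* Main.v *)
Require Import Defs.
From Stdlib Require Import Classical Arith Lia Cantor.

Definition add (G : fset) (e : form) : fset := fun f => G f \/ f = e.

Lemma weaken {s} G H f : derivable s G f -> (forall g, G g -> H g) -> derivable s H f.
Proof.
  intros D; revert H; induction D; intros H0 HG.
  - now apply d_ax.
  - apply d_hyp; auto.
  - eapply d_mp; eauto.
  - now apply d_boxP.
  - now apply d_diaP.
  - now apply d_boxN.
  - now apply d_diaN.
Qed.

Lemma thm {s} G f : derivable s emptyset f -> derivable s G f.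
Proof. intro D; eapply weaken; eauto. intros g []. Qed.

Lemma dA {s} G f : axN4 f -> derivable s G f.
Proof. intro; apply d_ax; left; auto. Qed.
Lemma dK {s} G f : axCN4K f -> derivable s G f.
Proof. intro; apply d_ax; right; left; auto. Qed.
Lemma dX {s} G f : ax_extra s f -> derivable s G f.
Proof. intro; apply d_ax; right; right; auto. Qed.

Lemma mp {s} G a b : derivable s G (Imp a b) -> derivable s G a -> derivable s G b.
Proof. apply d_mp. Qed.

Lemma dI {s} G a : derivable s G (Imp a a).
Proof.
  apply (mp _ (Imp a (Imp a a))).
  - apply (mp _ (Imp a (Imp (Imp a a) a))).
    + apply dA, A2.
    + apply dA, A1.
  - apply dA, A1.
Qed.

Lemma deduction {s} G e c : derivable s (add G e) c -> derivable s G (Imp e c).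
Proof.
  intro D; remember (add G e) as G' eqn:E; induction D; subst.
  - eapply mp; [apply dA, A1|]. now apply d_ax.
  - destruct H as [H|H].
    + eapply mp; [apply dA, A1|]. now apply d_hyp.
    + subst; apply dI.
  - eapply mp; [eapply mp; [apply dA, A2|] |]; eauto.
  - eapply mp; [apply dA, A1|]. now apply d_boxP.
  - eapply mp; [apply dA, A1|]. now apply d_diaP.
  - eapply mp; [apply dA, A1|]. now apply d_boxN.
  - eapply mp; [apply dA, A1|]. now apply d_diaN.
Qed.

Lemma cut {s} G H f : derivable s G f -> (forall g, G g -> derivable s H g) -> derivable s H f.
Proof.
  intros D; revert H; induction D; intros H0 HG.
  - now apply d_ax.
  - auto.
  - eapply d_mp; eauto.
  - now apply d_boxP.
  - now apply d_diaP.
  - now apply d_boxN.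
  - now apply d_diaN.
Qed.

Lemma hyp1 {s} G e : derivable s (add G e) e.
Proof. apply d_hyp; now right. Qed.

Lemma lift {s} G e f : derivable s G f -> derivable s (add G e) f.
Proof. intro D; eapply weaken; eauto. intros; now left. Qed.

Lemma iff1 {s} G a b : derivable s G (Iff a b) -> derivable s G a -> derivable s G b.
Proof. intros H1 H2. eapply mp; [|exact H2]. eapply mp; [apply dA, A3|exact H1]. Qed.
Lemma iff2 {s} G a b : derivable s G (Iff a b) -> derivable s G b -> derivable s G a.
Proof. intros H1 H2. eapply mp; [|exact H2]. eapply mp; [apply dA, A4|exact H1]. Qed.

Lemma cI {s} G a b : derivable s G a -> derivable s G b -> derivable s G (Conj a b).
Proof. intros; eapply mp; [eapply mp; [apply dA, A5|]|]; eauto. Qed.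
Lemma cE1 {s} G a b : derivable s G (Conj a b) -> derivable s G a.
Proof. intros; eapply mp; [apply dA, A3|]; eauto. Qed.
Lemma cE2 {s} G a b : derivable s G (Conj a b) -> derivable s G b.
Proof. intros; eapply mp; [apply dA, A4|]; eauto. Qed.
Lemma nnI {s} G a : derivable s G a -> derivable s G (Neg (Neg a)).
Proof. intros; eapply iff2; [apply dA, N1|]; auto. Qed.
Lemma nnE {s} G a : derivable s G (Neg (Neg a)) -> derivable s G a.
Proof. intros; eapply iff1; [apply dA, N1|]; auto. Qed.

Definition closed s (T : fset) := forall f, derivable s T f -> T f.

Lemma sat_closed {s} X : saturated s X -> closed s X.
Proof. intros [H _]; exact H. Qed.

Lemma closed_mp {s} T a b : closed s T -> T (Imp a b) -> T a -> T b.
Proof. intros C H1 H2; apply C; eapply mp; apply d_hyp; eauto. Qed.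

Lemma closed_thm {s} T a b : closed s T -> derivable s emptyset (Imp a b) -> T a -> T b.
Proof. intros C H1 H2; apply C; eapply mp; [apply thm; eauto| apply d_hyp; eauto]. Qed.

Fixpoint enc (f : form) : nat :=
  match f with
  | Var p => to_nat (0, p)
  | Neg a => to_nat (1, enc a)
  | Conj a b => to_nat (2, to_nat (enc a, enc b))
  | Disj a b => to_nat (3, to_nat (enc a, enc b))
  | Imp a b => to_nat (4, to_nat (enc a, enc b))
  | Box a => to_nat (5, enc a)
  | Dia a => to_nat (6, enc a)
  end.

Lemma to_nat_inj p q : to_nat p = to_nat q -> p = q.
Proof. intro H. rewrite <- (cancel_of_to p), <- (cancel_of_to q). now rewrite H. Qed.

Lemma enc_inj f g : enc f = enc g -> f = g.
Proof.
  revert g; induction f; destruct g; cbn [enc]; intro H; apply to_nat_inj in H;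
  apply pair_equal_spec in H as [H1 H]; try discriminate;
  try (apply to_nat_inj in H; apply pair_equal_spec in H as [H2 H]);
  f_equal; auto.
Qed.

Fixpoint chain s (G : fset) (c : form) (n : nat) : fset :=
  match n with
  | 0 => G
  | S n => fun g => chain s G c n g \/ (enc g = n /\ ~ derivable s (add (chain s G c n) g) c)
  end.

Lemma chain_mono s G c n m : n <= m -> forall g, chain s G c n g -> chain s G c m g.
Proof. induction 1; simpl; auto. Qed.

Lemma chain_cons s G c : ~ derivable s G c -> forall n, ~ derivable s (chain s G c n) c.
Proof.
  intros H0 n; induction n; simpl; auto.
  destruct (classic (exists g, enc g = n /\ ~ derivable s (add (chain s G c n) g) c)) as [[g [Eg Hg]]|Hn].
  - intro D; apply Hg; eapply weaken; eauto. simpl; intros h [Hh|[Eh _]]; [now left|right].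
    apply enc_inj; congruence.
  - intro D; apply IHn; eapply weaken; eauto. simpl; intros h [Hh|[Eh Hh]]; auto.
    exfalso; apply Hn; eauto.
Qed.

Definition lim s G c : fset := fun g => exists n, chain s G c n g.

Lemma compact s G c f : derivable s (lim s G c) f -> exists n, derivable s (chain s G c n) f.
Proof.
  intro D; remember (lim s G c) as L eqn:E; induction D; subst.
  - exists 0; now apply d_ax.
  - unfold lim in H; destruct H as [n Hn]; exists n; now apply d_hyp.
  - destruct IHD1 as [n Hn]; auto; destruct IHD2 as [m Hm]; auto.
    exists (max n m); eapply mp.
    + eapply weaken; [exact Hn|]. apply chain_mono; lia.
    + eapply weaken; [exact Hm|]. apply chain_mono; lia.
  - exists 0; now apply d_boxP.
  - exists 0; now apply d_diaP.
  - exists 0; now apply d_boxN.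
  - exists 0; now apply d_diaN.
Qed.

Lemma lim_cons {s G c} : ~ derivable s G c -> ~ derivable s (lim s G c) c.
Proof. intros H D; destruct (compact _ _ _ _ D) as [n Hn]; eapply chain_cons; eauto. Qed.

Lemma lim_out {s G c g} : ~ lim s G c g -> derivable s (add (lim s G c) g) c.
Proof.
  intro H; apply NNPP; intro D. apply H; exists (S (enc g)); simpl; right; split; auto.
  intro D'; apply D; eapply weaken; eauto. intros h [Hh|Hh]; [left; now exists (enc g)|now right].
Qed.

Lemma lindenbaum s G c : ~ derivable s G c ->
  exists D, saturated s D /\ (forall g, G g -> D g) /\ ~ D c.
Proof.
  intro H; exists (lim s G c); split; [split|split].
  - intros f Df; apply NNPP; intro Hf.
    apply (lim_cons H); eapply mp; [apply deduction, lim_out, Hf| exact Df].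
  - intros a b Hab; apply NNPP; intro Hn; apply (lim_cons H).
    assert (Ha : derivable s (lim s G c) (Imp a c)).
    { apply deduction, lim_out; intro; apply Hn; now left. }
    assert (Hb : derivable s (lim s G c) (Imp b c)).
    { apply deduction, lim_out; intro; apply Hn; now right. }
    eapply mp; [eapply mp; [eapply mp; [apply dA, A8|exact Ha]|exact Hb]|].
    now apply d_hyp.
  - intros g Hg; now exists 0.
  - intro Hc; apply (lim_cons H); now apply d_hyp.
Qed.

Lemma witness0 s (T G : fset) c : closed s T -> (forall g, G g -> T g) -> ~ T c ->
  exists D, saturated s D /\ (forall g, G g -> D g) /\ ~ D c.
Proof.
  intros C HG Hc; apply lindenbaum; intro D; apply Hc, C; eapply weaken; eauto.
Qed.

Lemma witness1 s (T G : fset) e c : closed s T -> (forall g, G g -> T g) -> ~ T (Imp e c) ->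
  exists D, saturated s D /\ (forall g, G g -> D g) /\ D e /\ ~ D c.
Proof.
  intros C HG Hc.
  destruct (lindenbaum s (add G e) c) as [D [S [H1 H2]]].
  - intro D; apply Hc, C; apply deduction; eapply weaken; eauto.
    intros g [Hg|Hg]; [left; auto|now right].
  - exists D; split; [exact S|split; [|split]].
    + intros; apply H1; now left.
    + apply H1; now right.
    + exact H2.
Qed.

Definition Top : fset := fun _ => True.
Lemma Top_sat s : saturated s Top.
Proof. split; intros; simpl; unfold Top; auto. Qed.

Definition Thm s : fset := fun f => derivable s emptyset f.
Lemma Thm_closed s : closed s (Thm s).
Proof. intros f D; eapply cut; eauto. Qed.

Definition TB (X : fset) : fset := fun f => X (Box f).
Definition TD (X : fset) : fset := fun f => X (Neg (Dia (Neg f))).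

Lemma hin {s} (X : fset) f : X f -> derivable s X f.
Proof. apply d_hyp. Qed.

Lemma thm_TB {s} X f : saturated s X -> derivable s emptyset f -> X (Box f).
Proof.
  intros S D. apply (@closed_thm s X (Box (Imp f f))); [now apply sat_closed| |].
  - apply d_boxP, deduction, lift, D.
  - apply (sat_closed _ S), dK, K1.
Qed.

Lemma TB_closed {s} X : saturated s X -> closed s (TB X).
Proof.
  intros S f D; remember (TB X) as G eqn:E; induction D; subst; unfold TB, TD in *.
  - apply (thm_TB (s:=s)); auto. now apply d_ax.
  - auto.
  - unfold TB in *. specialize (IHD1 eq_refl); specialize (IHD2 eq_refl).
    apply (@closed_thm s X (Box (Conj (Imp a b) a))); [now apply sat_closed| |].
    + apply d_boxP, deduction. eapply mp; [eapply cE1, hyp1|eapply cE2, hyp1].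
    + apply (sat_closed _ S). eapply mp; [apply dK, K3|]. apply cI; now apply hin.
  - apply (thm_TB (s:=s)); auto. now apply d_boxP.
  - apply (thm_TB (s:=s)); auto. now apply d_diaP.
  - apply (thm_TB (s:=s)); auto. now apply d_boxN.
  - apply (thm_TB (s:=s)); auto. now apply d_diaN.
Qed.

Lemma thm_TD {s} X f : saturated s X -> derivable s emptyset f -> X (Neg (Dia (Neg f))).
Proof.
  intros S D. apply (@closed_thm s X (Neg (Dia (Neg (Imp f f))))); [now apply sat_closed| |].
  - apply d_diaN, deduction, nnI, lift, D.
  - apply (sat_closed _ S), dK, K2.
Qed.

Lemma TD_closed {s} X : saturated s X -> closed s (TD X).
Proof.
  intros S f D; remember (TD X) as G eqn:E; induction D; subst; unfold TB, TD in *.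
  - apply (thm_TD (s:=s)); auto. now apply d_ax.
  - auto.
  - unfold TD in *. specialize (IHD1 eq_refl); specialize (IHD2 eq_refl).
    apply (@closed_thm s X (Neg (Dia (Disj (Neg (Imp a b)) (Neg a))))); [now apply sat_closed| |].
    + apply d_diaN, deduction. apply nnI.
      assert (H : derivable s (add emptyset (Neg (Disj (Neg (Imp a b)) (Neg a))))
                    (Conj (Neg (Neg (Imp a b))) (Neg (Neg a)))).
      { eapply iff1; [apply dA, N3|apply hyp1]. }
      eapply mp; [eapply nnE, cE1, H|eapply nnE, cE2, H].
    + apply (sat_closed _ S). eapply mp; [apply dK, K4|]. apply cI; now apply hin.
  - apply (thm_TD (s:=s)); auto. now apply d_boxP.
  - apply (thm_TD (s:=s)); auto. now apply d_diaP.
  - apply (thm_TD (s:=s)); auto. now apply d_boxN.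
  - apply (thm_TD (s:=s)); auto. now apply d_diaN.
Qed.

Lemma Xax {s} {X f} : saturated s X -> axiom s f -> X f.
Proof. intros S H; apply (sat_closed _ S); now apply d_ax. Qed.

Lemma Xmp {s} {X a b} : saturated s X -> X (Imp a b) -> X a -> X b.
Proof. intros S; apply (closed_mp (s:=s)); now apply sat_closed. Qed.

Lemma Xthm {s} {X a b} : saturated s X -> derivable s emptyset (Imp a b) -> X a -> X b.
Proof. intros S; apply (closed_thm (s:=s)); now apply sat_closed. Qed.

Lemma Xiff1 {s} {X a b} : saturated s X -> axiom s (Iff a b) -> X a -> X b.
Proof. intros S H Ha. unfold Iff in H. apply (Xthm (a:=a) S); [apply (cE1 _ _ (Imp b a)); now apply d_ax | exact Ha]. Qed.
Lemma Xiff2 {s} {X a b} : saturated s X -> axiom s (Iff a b) -> X b -> X a.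
Proof. intros S H Ha. unfold Iff in H. apply (Xthm (a:=b) S); [apply (cE2 _ (Imp a b)); now apply d_ax | exact Ha]. Qed.

Lemma t_nnI {s} a : derivable s emptyset (Imp a (Neg (Neg a))).
Proof. apply deduction, nnI, hyp1. Qed.
Lemma t_nnE {s} a : derivable s emptyset (Imp (Neg (Neg a)) a).
Proof. apply deduction, nnE, hyp1. Qed.

Lemma X_nBox_nn {s} {X c} : saturated s X -> X (Neg (Box c)) -> X (Neg (Box (Neg (Neg c)))).
Proof. intros S; apply (Xthm S), d_boxN, t_nnI. Qed.
Lemma X_nBox_unnn {s} {X c} : saturated s X -> X (Neg (Box (Neg (Neg c)))) -> X (Neg (Box c)).
Proof. intros S; apply (Xthm S), d_boxN, t_nnE. Qed.
Lemma X_nDia_nn {s} {X c} : saturated s X -> X (Neg (Dia c)) -> X (Neg (Dia (Neg (Neg c)))).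
Proof. intros S; apply (Xthm S), d_diaN, t_nnI. Qed.
Lemma X_nDia_unnn {s} {X c} : saturated s X -> X (Neg (Dia (Neg (Neg c)))) -> X (Neg (Dia c)).
Proof. intros S; apply (Xthm S), d_diaN, t_nnE. Qed.

Definition Gd (X : fset) : fset := fun f => exists b, X (Neg (Dia b)) /\ f = Neg b.

Lemma Gd_TD {s} X : saturated s X -> forall g, Gd X g -> TD X g.
Proof. intros S g [b [Hb ->]]; unfold TD; exact (X_nDia_nn S Hb). Qed.

Definition hasJB s := forall a, ax_extra s (ax_joinB a).
Definition hasJD s := forall a, ax_extra s (ax_joinD a).
Definition hasPB s := forall a b, ax_extra s (ax_pmB a b).
Definition hasPD s := forall a b, ax_extra s (ax_pmD a b).
Definition hasVB s := forall a b, ax_extra s (ax_veeB a b).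
Definition hasVD s := forall a b, ax_extra s (ax_veeD a b).

Lemma Gd_TB {s} X : hasJB s -> saturated s X -> forall g, Gd X g -> TB X g.
Proof.
  intros J S g [b [Hb ->]]; unfold TB.
  apply (Xiff2 S (a := Box (Neg b)) (b := Neg (Dia (Neg (Neg b))))).
  - right; right; apply J.
  - exact (X_nDia_nn S Hb).
Qed.

Lemma X_imp2 {s} {X f a b} : saturated s X -> axiom s (Imp f (Imp a b)) -> X f -> X a -> X b.
Proof. intros S Ax Hf Ha. apply (Xmp S (a:=a)); auto. apply (Xmp S (a:=f)); auto. exact (Xax S Ax). Qed.

Definition CB (X Y : fset) := forall b, X (Box b) -> Y b.
Definition CD (X Y : fset) := forall b, X (Neg (Dia b)) -> Y (Neg b).

Lemma mk s (X : fset) (Bp Bn Dp Dn : family) :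
  saturated s X ->
  (forall Y, Bp Y -> saturated s Y /\ CB X Y) ->
  (forall Y, Dn Y -> saturated s Y /\ CD X Y) ->
  (forall Y, Bn Y -> saturated s Y) -> (forall Y, Dp Y -> saturated s Y) ->
  (forall a, X (Neg (Box a)) -> exists Y, Bn Y /\ Y (Neg a)) ->
  (forall a, X (Dia a) -> exists Y, Dp Y /\ Y a) ->
  seg_shape s Bp Bn Dp Dn ->
  exists y : segment s, head y = X /\ fBp y = Bp /\ fBn y = Bn /\ fDp y = Dp /\ fDn y = Dn.
Proof.
  intros S HBp HDn HBn HDp EBn EDp Sh.
  unshelve refine (ex_intro _ (@Segment s X Bp Bn Dp Dn S _ _ _ _ _ _ _ _ Sh) _).
  - intros; now apply HBp.
  - exact HBn.
  - exact HDp.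
  - intros; now apply HDn.
  - intros a Ha Y HY; now apply HBp.
  - exact EBn.
  - exact EDp.
  - intros a Ha Y HY; now apply HDn.
  - simpl; auto.
Qed.

Lemma same_fam_refl (P : family) : same_fam P P.
Proof. intro; tauto. Qed.

Lemma triv s (D : fset) : saturated s D -> exists z : segment s, head z = D.
Proof.
  intro S.
  destruct (mk s D (fun Y => Y = Top) (fun Y => Y = Top) (fun Y => Y = Top) (fun Y => Y = Top)) as [z [Hz _]]; auto.
  - intros Y ->; split; [apply Top_sat|intros b _; exact I].
  - intros Y ->; split; [apply Top_sat|intros b _; exact I].
  - intros Y ->; apply Top_sat.
  - intros Y ->; apply Top_sat.
  - intros; exists Top; split; auto; exact I.
  - intros; exists Top; split; auto; exact I.
  - destruct s; simpl; repeat split; apply same_fam_refl.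
  - now exists z.
Qed.

Lemma XpmB {s X c a} : saturated s X -> hasPB s -> X (Box (Imp c a)) -> X (Dia c) -> X (Dia a).
Proof. intros S H H1 H2. apply (Xmp S (a:=Dia c)); auto. apply (Xmp S (a:=Box (Imp c a))); auto.
  apply (Xax S); right; right; apply H. Qed.
Lemma XpmD {s X c a} : saturated s X -> hasPD s ->
  X (Neg (Dia (Neg (Imp (Neg c) (Neg a))))) -> X (Neg (Box c)) -> X (Neg (Box a)).
Proof. intros S H H1 H2. apply (Xmp S (a:=Neg (Box c))); auto. apply (Xmp S (a:=Neg (Dia (Neg (Imp (Neg c) (Neg a)))))); auto.
  apply (Xax S); right; right; apply H. Qed.
Lemma XveeB {s X c a} : saturated s X -> hasVB s -> X (Box (Imp c a)) -> X (Neg (Box (Neg c))) -> X (Neg (Box (Neg a))).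
Proof. intros S H H1 H2. apply (Xmp S (a:=Neg (Box (Neg c)))); auto. apply (Xmp S (a:=Box (Imp c a))); auto.
  apply (Xax S); right; right; apply H. Qed.
Lemma XveeD {s X c a} : saturated s X -> hasVD s -> X (Neg (Dia (Neg (Imp c a)))) -> X (Dia c) -> X (Dia a).
Proof. intros S H H1 H2. apply (Xmp S (a:=Dia c)); auto. apply (Xmp S (a:=Neg (Dia (Neg (Imp c a))))); auto.
  apply (Xax S); right; right; apply H. Qed.
Lemma XjB1 {s X a} : saturated s X -> hasJB s -> X (Box a) -> X (Neg (Dia (Neg a))).
Proof. intros S H; apply (Xiff1 S); right; right; apply H. Qed.
Lemma XjB2 {s X a} : saturated s X -> hasJB s -> X (Neg (Dia (Neg a))) -> X (Box a).
Proof. intros S H; apply (Xiff2 S); right; right; apply H. Qed.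
Lemma XjD1 {s X a} : saturated s X -> hasJD s -> X (Dia a) -> X (Neg (Box (Neg a))).
Proof. intros S H; apply (Xiff1 S); right; right; apply H. Qed.
Lemma XjD2 {s X a} : saturated s X -> hasJD s -> X (Neg (Box (Neg a))) -> X (Dia a).
Proof. intros S H; apply (Xiff2 S); right; right; apply H. Qed.

Lemma pmB1 : hasPB Spm. Proof. intros a b; constructor. Qed.
Lemma pmD1 : hasPD Spm. Proof. intros a b; constructor. Qed.
Lemma veB1 : hasVB Svee. Proof. intros a b; constructor. Qed.
Lemma veD1 : hasVD Svee. Proof. intros a b; constructor. Qed.
Lemma jB1 : hasJB Sjoin. Proof. intros a; constructor. Qed.
Lemma jD1 : hasJD Sjoin. Proof. intros a; constructor. Qed.
Lemma pmB2 : hasPB Sone. Proof. intros a b; left; constructor. Qed.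
Lemma veB2 : hasVB Sone. Proof. intros a b; right; left; constructor. Qed.
Lemma jB2 : hasJB Sone. Proof. intros a; right; right; constructor. Qed.
Lemma jD2 : hasJD Sone. Proof. intros a; right; right; constructor. Qed.

Lemma W_B {s X a} : saturated s X -> ~ X (Box a) ->
  exists D, saturated s D /\ CB X D /\ ~ D a.
Proof.
  intros S H. destruct (witness0 s (TB X) (TB X) a (TB_closed X S) (fun g h => h) H) as [D [SD [HD Hc]]].
  exists D; split; [exact SD|]; repeat split; auto.
Qed.

Lemma W_D {s X a} : saturated s X -> ~ X (Neg (Dia a)) ->
  exists D, saturated s D /\ CD X D /\ ~ D (Neg a).
Proof.
  intros S H. destruct (witness0 s (TD X) (Gd X) (Neg a) (TD_closed X S) (Gd_TD X S)
     (fun H' => H (X_nDia_unnn S H'))) as [D [SD [HD Hc]]].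
  exists D; split; [exact SD|]; repeat split; auto. intros b Hb; apply HD; now exists b.
Qed.

Definition GBD (X : fset) : fset := fun f => TB X f \/ Gd X f.

Lemma GBD_TB {s X} : hasJB s -> saturated s X -> forall g, GBD X g -> TB X g.
Proof. intros J S g [H|H]; auto. apply (Gd_TB X J S), H. Qed.

Lemma GBD_C {X D} : (forall g, GBD X g -> D g) -> CB X D /\ CD X D.
Proof. intros H; split; [intros b Hb; apply H; now left| intros b Hb; apply H; right; now exists b]. Qed.

Lemma W_BD {s X a} : hasJB s -> saturated s X -> ~ X (Box a) ->
  exists D, saturated s D /\ CB X D /\ CD X D /\ ~ D a.
Proof.
  intros J S H. destruct (witness0 s (TB X) (GBD X) a (TB_closed X S) (GBD_TB J S) H) as [D [SD [HD Hc]]].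
  destruct (GBD_C HD); exists D; split; [exact SD|]; repeat split; auto.
Qed.

Lemma W_BD' {s X a} : hasJB s -> saturated s X -> ~ X (Neg (Dia a)) ->
  exists D, saturated s D /\ CB X D /\ CD X D /\ ~ D (Neg a).
Proof.
  intros J S H. apply W_BD; auto. intro H'; apply H, (X_nDia_unnn S), (XjB1 S J H').
Qed.

Lemma W_B1 {s X e c} : saturated s X -> ~ X (Box (Imp e c)) ->
  exists D, saturated s D /\ CB X D /\ D e /\ ~ D c.
Proof.
  intros S H. destruct (witness1 s (TB X) (TB X) e c (TB_closed X S) (fun g h => h) H) as [D [SD [HD [He Hc]]]].
  exists D; split; [exact SD|]; repeat split; auto.
Qed.

Lemma W_D1 {s X e c} : saturated s X -> ~ X (Neg (Dia (Neg (Imp e c)))) ->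
  exists D, saturated s D /\ CD X D /\ D e /\ ~ D c.
Proof.
  intros S H. destruct (witness1 s (TD X) (Gd X) e c (TD_closed X S) (Gd_TD X S) H) as [D [SD [HD [He Hc]]]].
  exists D; split; [exact SD|]; repeat split; auto. intros b Hb; apply HD; now exists b.
Qed.

Lemma W_BD1 {s X e c} : hasJB s -> saturated s X -> ~ X (Box (Imp e c)) ->
  exists D, saturated s D /\ CB X D /\ CD X D /\ D e /\ ~ D c.
Proof.
  intros J S H. destruct (witness1 s (TB X) (GBD X) e c (TB_closed X S) (GBD_TB J S) H) as [D [SD [HD [He Hc]]]].
  destruct (GBD_C HD); exists D; split; [exact SD|]; repeat split; auto.
Qed.

Lemma W_T1 {s e c} : ~ derivable s emptyset (Imp e c) ->
  exists D, saturated s D /\ D e /\ ~ D c.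
Proof.
  intros H. destruct (witness1 s (Thm s) emptyset e c (Thm_closed s) (fun g h => match h with end) H) as [D [SD [HD [He Hc]]]].
  exists D; split; [exact SD|]; repeat split; auto.
Qed.

Definition FB s X : family := fun Y => saturated s Y /\ CB X Y.
Definition FD s X : family := fun Y => saturated s Y /\ CD X Y.
Definition FBD s X : family := fun Y => saturated s Y /\ CB X Y /\ CD X Y.
Definition FA s : family := fun Y => saturated s Y.
Definition rst (F : family) (c : form) : family := fun Y => F Y /\ ~ Y c.

Ltac side := first [ assumption
  | (intros ? HY; unfold FB, FD, FBD, FA, rst in HY |- *; tauto)
  | (intros ? _; exists Top; split; [unfold FB, FD, FBD, FA; first [apply Top_sat | split; [apply Top_sat| try split; intros ? ?; exact I]] | exact I])
  | (simpl; repeat split; apply same_fam_refl) ].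


Ltac fin E := rewrite E; unfold FB, FD, FBD, FA, rst; tauto.

Lemma base s X : saturated s X -> exists y : segment s, head y = X /\
  (forall a, ~ X (Box a) -> exists D, fBp y D /\ saturated s D /\ ~ D a) /\
  (forall a, ~ X (Neg (Dia a)) -> exists D, fDn y D /\ saturated s D /\ ~ D (Neg a)).
Proof.
  intro S; destruct s.
  - edestruct (mk Spm X (FB Spm X) (FD Spm X) (FB Spm X) (FD Spm X)) as [y [E1 [E2 [E3 [E4 E5]]]]].
    all: try side.
    exists y; split; [exact E1|split].
    + intros a Ha; destruct (W_B S Ha) as [D [SD [C HD]]]; exists D; split; [fin E2|auto].
    + intros a Ha; destruct (W_D S Ha) as [D [SD [C HD]]]; exists D; split; [fin E5|auto].
  - edestruct (mk Svee X (FB Svee X) (FB Svee X) (FD Svee X) (FD Svee X)) as [y [E1 [E2 [E3 [E4 E5]]]]].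
    all: try side.
    exists y; split; [exact E1|split].
    + intros a Ha; destruct (W_B S Ha) as [D [SD [C HD]]]; exists D; split; [fin E2|auto].
    + intros a Ha; destruct (W_D S Ha) as [D [SD [C HD]]]; exists D; split; [fin E5|auto].
  - edestruct (mk Sjoin X (FBD Sjoin X) (FA Sjoin) (FA Sjoin) (FBD Sjoin X)) as [y [E1 [E2 [E3 [E4 E5]]]]].
    all: try side.
    exists y; split; [exact E1|split].
    + intros a Ha; destruct (W_BD jB1 S Ha) as [D [SD [C [C' HD]]]]; exists D; split; [fin E2|auto].
    + intros a Ha; destruct (W_BD' jB1 S Ha) as [D [SD [C [C' HD]]]]; exists D; split; [fin E5|auto].
  - edestruct (mk Sone X (FBD Sone X) (FBD Sone X) (FBD Sone X) (FBD Sone X)) as [y [E1 [E2 [E3 [E4 E5]]]]].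
    all: try side.
    exists y; split; [exact E1|split].
    + intros a Ha; destruct (W_BD jB2 S Ha) as [D [SD [C [C' HD]]]]; exists D; split; [fin E2|auto].
    + intros a Ha; destruct (W_BD' jB2 S Ha) as [D [SD [C [C' HD]]]]; exists D; split; [fin E5|auto].
Qed.

Ltac mainDp E1 E := exists _; split; [exact E1|]; intros D HD; rewrite E in HD; unfold rst in HD; tauto.

Lemma NDp s X a : saturated s X -> ~ X (Dia a) ->
  exists y : segment s, head y = X /\ forall D, fDp y D -> ~ D a.
Proof.
  intros S Ha; destruct s.
  - edestruct (mk Spm X (rst (FB Spm X) a) (FD Spm X) (rst (FB Spm X) a) (FD Spm X)) as [y [E1 [E2 [E3 [E4 E5]]]]].
    all: try side.
    + intros c Hc. destruct (W_B1 (e:=c) (c:=a) S) as [D [SD [C [He Hn]]]].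
      { intro H; apply Ha, (XpmB S pmB1 H Hc). }
      exists D; split; [unfold rst, FB; tauto|exact He].
    + exists y; split; [exact E1|]; intros D HD; rewrite E4 in HD; unfold rst in HD; tauto.
  - edestruct (mk Svee X (FB Svee X) (FB Svee X) (rst (FD Svee X) a) (rst (FD Svee X) a)) as [y [E1 [E2 [E3 [E4 E5]]]]].
    all: try side.
    + intros c Hc. destruct (W_D1 (e:=c) (c:=a) S) as [D [SD [C [He Hn]]]].
      { intro H; apply Ha, (XveeD S veD1 H Hc). }
      exists D; split; [unfold rst, FD; tauto|exact He].
    + exists y; split; [exact E1|]; intros D HD; rewrite E4 in HD; unfold rst in HD; tauto.
  - edestruct (mk Sjoin X (FBD Sjoin X) (rst (FA Sjoin) a) (rst (FA Sjoin) a) (FBD Sjoin X)) as [y [E1 [E2 [E3 [E4 E5]]]]].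
    all: try side.
    + intros c Hc. destruct (W_T1 (s:=Sjoin) (e:=Neg c) (c:=a)) as [D [SD [He Hn]]].
      { intro H; apply Ha, (XjD2 S jD1). apply (Xthm S (a := Neg (Box c))); auto.
        apply d_boxN, deduction, nnI. eapply mp; [apply lift, H|apply hyp1]. }
      exists D; split; [unfold rst, FA; tauto|exact He].
    + intros c Hc. destruct (W_T1 (s:=Sjoin) (e:=c) (c:=a)) as [D [SD [He Hn]]].
      { intro H; apply Ha. apply (Xthm S (a := Dia c)); auto. now apply d_diaP. }
      exists D; split; [unfold rst, FA; tauto|exact He].
    + exists y; split; [exact E1|]; intros D HD; rewrite E4 in HD; unfold rst in HD; tauto.
  - edestruct (mk Sone X (rst (FBD Sone X) a) (rst (FBD Sone X) a) (rst (FBD Sone X) a) (rst (FBD Sone X) a)) as [y [E1 [E2 [E3 [E4 E5]]]]].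
    all: try side.
    + intros c Hc. destruct (W_BD1 (e:=Neg c) (c:=a) jB2 S) as [D [SD [C [C' [He Hn]]]]].
      { intro H; apply Ha, (XjD2 S jD2), (XveeB S veB2 H), (X_nBox_nn S Hc). }
      exists D; split; [unfold rst, FBD; tauto|exact He].
    + intros c Hc. destruct (W_BD1 (e:=c) (c:=a) jB2 S) as [D [SD [C [C' [He Hn]]]]].
      { intro H; apply Ha, (XpmB S pmB2 H Hc). }
      exists D; split; [unfold rst, FBD; tauto|exact He].
    + exists y; split; [exact E1|]; intros D HD; rewrite E4 in HD; unfold rst in HD; tauto.
Qed.

Lemma NBn s X a : saturated s X -> ~ X (Neg (Box a)) ->
  exists y : segment s, head y = X /\ forall D, fBn y D -> ~ D (Neg a).
Proof.
  intros S Ha; destruct s.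
  - edestruct (mk Spm X (FB Spm X) (rst (FD Spm X) (Neg a)) (FB Spm X) (rst (FD Spm X) (Neg a))) as [y [E1 [E2 [E3 [E4 E5]]]]].
    all: try side.
    + intros c Hc. destruct (W_D1 (e:=Neg c) (c:=Neg a) S) as [D [SD [C [He Hn]]]].
      { intro H; apply Ha, (XpmD S pmD1 H Hc). }
      exists D; split; [unfold rst, FD; tauto|exact He].
    + exists y; split; [exact E1|]; intros D HD; rewrite E3 in HD; unfold rst in HD; tauto.
  - edestruct (mk Svee X (rst (FB Svee X) (Neg a)) (rst (FB Svee X) (Neg a)) (FD Svee X) (FD Svee X)) as [y [E1 [E2 [E3 [E4 E5]]]]].
    all: try side.
    + intros c Hc. destruct (W_B1 (e:=Neg c) (c:=Neg a) S) as [D [SD [C [He Hn]]]].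
      { intro H; apply Ha, (X_nBox_unnn S), (XveeB S veB1 H), (X_nBox_nn S Hc). }
      exists D; split; [unfold rst, FB; tauto|exact He].
    + exists y; split; [exact E1|]; intros D HD; rewrite E3 in HD; unfold rst in HD; tauto.
  - edestruct (mk Sjoin X (FBD Sjoin X) (rst (FA Sjoin) (Neg a)) (rst (FA Sjoin) (Neg a)) (FBD Sjoin X)) as [y [E1 [E2 [E3 [E4 E5]]]]].
    all: try side.
    + intros c Hc. destruct (W_T1 (s:=Sjoin) (e:=Neg c) (c:=Neg a)) as [D [SD [He Hn]]].
      { intro H; apply Ha. apply (Xthm S (a := Neg (Box c))); auto. now apply d_boxN. }
      exists D; split; [unfold rst, FA; tauto|exact He].
    + intros c Hc. destruct (W_T1 (s:=Sjoin) (e:=c) (c:=Neg a)) as [D [SD [He Hn]]].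
      { intro H; apply Ha, (X_nBox_unnn S), (XjD1 S jD1). apply (Xthm S (a := Dia c)); auto. now apply d_diaP. }
      exists D; split; [unfold rst, FA; tauto|exact He].
    + exists y; split; [exact E1|]; intros D HD; rewrite E3 in HD; unfold rst in HD; tauto.
  - edestruct (mk Sone X (rst (FBD Sone X) (Neg a)) (rst (FBD Sone X) (Neg a)) (rst (FBD Sone X) (Neg a)) (rst (FBD Sone X) (Neg a))) as [y [E1 [E2 [E3 [E4 E5]]]]].
    all: try side.
    + intros c Hc. destruct (W_BD1 (e:=Neg c) (c:=Neg a) jB2 S) as [D [SD [C [C' [He Hn]]]]].
      { intro H; apply Ha, (X_nBox_unnn S), (XveeB S veB2 H), (X_nBox_nn S Hc). }
      exists D; split; [unfold rst, FBD; tauto|exact He].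
    + intros c Hc. destruct (W_BD1 (e:=c) (c:=Neg a) jB2 S) as [D [SD [C [C' [He Hn]]]]].
      { intro H; apply Ha, (X_nBox_unnn S), (XjD1 S jD2), (XpmB S pmB2 H Hc). }
      exists D; split; [unfold rst, FBD; tauto|exact He].
    + exists y; split; [exact E1|]; intros D HD; rewrite E3 in HD; unfold rst in HD; tauto.
Qed.

Lemma Xprime {s X a b} : saturated s X -> X (Disj a b) -> X a \/ X b.
Proof. intros [_ P]; apply P. Qed.

Lemma Xax' {s X f} : saturated s X -> axN4 f -> X f.
Proof. intros S H; apply (Xax S); now left. Qed.

Lemma XcI {s X a b} : saturated s X -> X a -> X b -> X (Conj a b).
Proof. intros S Ha Hb; apply (X_imp2 S (f:=a) (a:=b)); auto. left; constructor. Qed.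
Lemma XcE1 {s X a b} : saturated s X -> X (Conj a b) -> X a.
Proof. intros S H; apply (Xmp S (a := Conj a b)); auto. apply (Xax' S); constructor. Qed.
Lemma XcE2 {s X a b} : saturated s X -> X (Conj a b) -> X b.
Proof. intros S H; apply (Xmp S (a := Conj a b)); auto. apply (Xax' S); constructor. Qed.
Lemma XdI1 {s X a b} : saturated s X -> X a -> X (Disj a b).
Proof. intros S H; apply (Xmp S (a := a)); auto. apply (Xax' S); constructor. Qed.
Lemma XdI2 {s X a b} : saturated s X -> X b -> X (Disj a b).
Proof. intros S H; apply (Xmp S (a := b)); auto. apply (Xax' S); constructor. Qed.
Lemma XN {s X a b} : saturated s X -> axN4 (Iff a b) -> (X a <-> X b).
Proof. intros S H; split; [apply (Xiff1 S)|apply (Xiff2 S)]; now left. Qed.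

Theorem truth (s : star) (f : form) : forall (x : segment s),
  (supp (canon s) f true x <-> head x f) /\
  (supp (canon s) f false x <-> head x (Neg f)).
Proof.
  induction f as [p|a IHa|a IHa c IHc|a IHa c IHc|a IHa c IHc|a IHa|a IHa]; intro x;
    pose proof (head_sat x) as S; simpl.
  - tauto.
  - split; [apply IHa|]. rewrite (proj1 (IHa x)), (XN S (N1 a)); tauto.
  - rewrite (proj1 (IHa x)), (proj1 (IHc x)), (proj2 (IHa x)), (proj2 (IHc x)).
    rewrite (XN S (N2 a c)). split; split.
    + intros [H1 H2]; now apply (XcI S).
    + intro H; split; [apply (XcE1 S H)|apply (XcE2 S H)].
    + intros [H|H]; [apply (XdI1 S H)|apply (XdI2 S H)].
    + apply (Xprime S).
  - rewrite (proj1 (IHa x)), (proj1 (IHc x)), (proj2 (IHa x)), (proj2 (IHc x)).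
    rewrite (XN S (N3 a c)). split; split.
    + intros [H|H]; [apply (XdI1 S H)|apply (XdI2 S H)].
    + apply (Xprime S).
    + intros [H1 H2]; now apply (XcI S).
    + intro H; split; [apply (XcE1 S H)|apply (XcE2 S H)].
  - split.
    + split.
      * intro H. apply NNPP; intro Hn.
        destruct (witness1 s (head x) (head x) a c (sat_closed _ S) (fun g h => h) Hn) as [D [SD [HD [He Hc]]]].
        destruct (triv s D SD) as [z Ez].
        apply Hc. rewrite <- Ez. apply IHc. apply H.
        -- intros g Hg; rewrite Ez; auto.
        -- apply IHa; now rewrite Ez.
      * intros H w' Hw Ha. apply IHc. apply IHa in Ha. exact (Xmp (head_sat w') (Hw _ H) Ha).
    + rewrite (proj1 (IHa x)), (proj2 (IHc x)), (XN S (N4 a c)). split.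
      * intros [H1 H2]; now apply (XcI S).
      * intro H; split; [apply (XcE1 S H)|apply (XcE2 S H)].
  - split.
    + split.
      * intro H. apply NNPP; intro Hn.
        destruct (base s (head x) S) as [y [E1 [H1 _]]].
        destruct (H1 a Hn) as [D [HD [SD Hc]]].
        destruct (triv s D SD) as [z Ez].
        apply Hc. rewrite <- Ez. apply IHa. apply (H y).
        -- intros g Hg; rewrite E1; auto.
        -- exists D; split; auto. rewrite Ez; intro; tauto.
      * intros H w' Hw w'' [Y [HY Same]]. apply IHa. apply Same.
        exact (seg_Bp w' a (Hw _ H) Y HY).
    + split.
      * intro H. apply NNPP; intro Hn.
        destruct (NBn s (head x) a S Hn) as [y [E1 H1]].
        destruct (H y) as [w'' [[Y [HY Same]] Hs]].
        { intros g Hg; rewrite E1; auto. }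
        apply (H1 Y HY). apply Same. now apply IHa.
      * intros H w' Hw. destruct (seg_Bn w' a (Hw _ H)) as [Y [HY Hn]].
        destruct (triv s Y (fBn_sat w' Y HY)) as [z Ez].
        exists z; split.
        -- exists Y; split; auto. rewrite Ez; intro; tauto.
        -- apply IHa. now rewrite Ez.
  - split.
    + split.
      * intro H. apply NNPP; intro Hn.
        destruct (NDp s (head x) a S Hn) as [y [E1 H1]].
        destruct (H y) as [w'' [[Y [HY Same]] Hs]].
        { intros g Hg; rewrite E1; auto. }
        apply (H1 Y HY). apply Same. now apply IHa.
      * intros H w' Hw. destruct (seg_Dp w' a (Hw _ H)) as [Y [HY Hn]].
        destruct (triv s Y (fDp_sat w' Y HY)) as [z Ez].
        exists z; split.
        -- exists Y; split; auto. rewrite Ez; intro; tauto.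
        -- apply IHa. now rewrite Ez.
    + split.
      * intro H. apply NNPP; intro Hn.
        destruct (base s (head x) S) as [y [E1 [_ H1]]].
        destruct (H1 a Hn) as [D [HD [SD Hc]]].
        destruct (triv s D SD) as [z Ez].
        apply Hc. rewrite <- Ez. apply IHa. apply (H y).
        -- intros g Hg; rewrite E1; auto.
        -- exists D; split; auto. rewrite Ez; intro; tauto.
      * intros H w' Hw w'' [Y [HY Same]]. apply IHa. apply Same.
        exact (seg_Dn w' a (Hw _ H) Y HY).
Qed.

Theorem lemma3 (s : star) (f : form) (x : segment s) :
  (supp (canon s) f true x <-> head x f) /\
  (supp (canon s) f false x <-> head x (Neg f)).
Proof. exact (truth s f x). Qed.
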